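(* Let $X \subseteq 2^\omega$ be nice. Then for every Borel function $x \mapsto f^x$ from $2^\omega$ to $\omega^\omega$ there exists a strictly increasing sequence $\{n_k : k \in \omega\}$ of natural numbers such that for every $x \in X$ there are infinitely many $k$ with $f^x(n_k) < n_{k+1}$.
   Context: A set $X \subseteq 2^\omega$ is nice if for every Borel function $x \mapsto f^x$ from $2^\omega$ to $\omega^\omega$ there exists $g \in \omega^\omega$ such that for every $x \in X$ there are infinitely many $n$ with $f^x(n) = g(n)$. *)

(* Defs.v *)
From HB Require Import structures.
From mathcomp Require Import all_boot all_order all_algebra.
From mathcomp Require Import all_classical all_reals all_analysis.
Set Implicit Arguments. Unset Strict Implicit. Unset Printing Implicit Defensive.
Local Open Scope classical_set_scope.

(* Cantor space 2^omega is the library's [cantor_space]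
   (= prod_topology (fun _ : nat => bool)).
   Baire space omega^omega: product of countably many discrete copies of nat. *)
Definition baire_space : topologicalType := prod_topology (fun _ : nat => nat).

Definition borel_set {T : topologicalType} (A : set T) : Prop := <<s open >> A.

Definition borel_fun {S T : topologicalType} (f : S -> T) : Prop :=
  forall B : set T, borel_set B -> borel_set (f @^-1` B).

Definition infinitely_many (P : nat -> Prop) : Prop :=
  forall N : nat, exists n, (N <= n)%N /\ P n.

Definition nice (X : set cantor_space) : Prop :=
  forall f : cantor_space -> baire_space, borel_fun f ->
    exists g : nat -> nat,
      forall x, X x -> infinitely_many (fun n => f x n = g n).

(* Main.v *)
Require Import Defs.
From HB Require Import structures.
From mathcomp Require Import all_boot all_order all_algebra.
From mathcomp Require Import all_classical all_reals all_analysis.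
From mathcomp Require Import zify.
From Stdlib Require Import Lia.
Local Open Scope classical_set_scope.

Fixpoint rmax (p : nat -> nat) (n : nat) : nat :=
  match n with 0 => p 0 | k.+1 => maxn (rmax p k) (p k.+1) end.

Lemma rmax_ge p n : (p n <= rmax p n)%N.
Proof. by case: n => //= n; rewrite leq_maxr. Qed.

Lemma rmax_mono p m n : (m <= n)%N -> (rmax p m <= rmax p n)%N.
Proof.
move=> /subnK <-; elim: (n - m)%N => // d IH.
rewrite addSn /=; exact: leq_trans IH (leq_maxl _ _).
Qed.

Lemma rmax_eq p q n : (forall i, (i <= n)%N -> p i = q i) -> rmax p n = rmax q n.
Proof.
elim: n => [|n IH] H /=; first by rewrite H.
by rewrite IH ?H // => i Hi; apply: H; rewrite (leq_trans Hi).
Qed.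

Definition hh (p : nat -> nat) n := (n.+1 + rmax p n)%N.
Definition HH (p : nat -> nat) n := hh p (hh p n).

Lemma hh_gt p n : (p n < hh p n)%N.
Proof. rewrite /hh; have := rmax_ge p n; lia. Qed.
Lemma hh_gtn p n : (n < hh p n)%N.
Proof. rewrite /hh; lia. Qed.
Lemma hh_mono p m n : (m <= n)%N -> (hh p m <= hh p n)%N.
Proof. move=> mn; rewrite /hh; have := @rmax_mono p _ _ mn; lia. Qed.

Fixpoint nkseq (G : nat -> nat) k := match k with
 0 => 0%N | k.+1 => (nkseq G k + 1 + G (nkseq G k))%N end.

Lemma nkseq_ge G k : (k <= nkseq G k)%N.
Proof. elim: k => //= k IH; lia. Qed.

Lemma nkseq_find G N m : (nkseq G N <= m)%N ->
  exists k, [/\ (N <= k)%N, (nkseq G k <= m)%N & (m < nkseq G k.+1)%N].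
Proof.
move=> Hm.
suff H : forall j, (m < nkseq G (N + j))%N -> exists k, [/\ (N <= k)%N, (nkseq G k <= m)%N & (m < nkseq G k.+1)%N].
  apply: (H m.+1); have := nkseq_ge G (N + m.+1); lia.
elim=> [|j IH]; first by rewrite addn0; lia.
move=> Hj; case: (ltnP m (nkseq G (N + j))) => Hc; first exact: IH.
by exists (N + j)%N; split => //; [lia | rewrite -addnS].
Qed.

Lemma combi (g p : nat -> nat) N :
  infinitely_many (fun m => HH p m = g m) ->
  exists k, (N <= k)%N /\ (p (nkseq (rmax g) k) < nkseq (rmax g) k.+1)%N.
Proof.
move=> /(_ (nkseq (rmax g) N)) [m [Hm Heq]].
have [k [Nk H1 H2]] := @nkseq_find _ _ _ Hm.
case: (ltnP (hh p m) (nkseq (rmax g) k.+1)) => Hc.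
  exists k; split => //.
  have := hh_gt p (nkseq (rmax g) k); have := @hh_mono p _ _ H1; lia.
exists k.+1; split; first lia.
have A := hh_gt p (nkseq (rmax g) k.+1).
have B := @hh_mono p _ _ Hc.
have C : (hh p (hh p m) = g m) by exact Heq.
have D := rmax_ge g m.
have E := @rmax_mono g _ _ (ltnW H2).
have -> : nkseq (rmax g) k.+2 = (nkseq (rmax g) k.+1 + 1 + rmax g (nkseq (rmax g) k.+1))%N by []. lia.
Qed.
Lemma HH_eq p q t : (forall i, (i <= hh p t)%N -> q i = p i) -> HH q t = HH p t.
Proof.
move=> H.
have E1 : hh q t = hh p t.
  rewrite /hh (@rmax_eq q p t) // => i it; apply: H.
  have := hh_gtn p t; lia.
rewrite /HH E1 /hh (@rmax_eq q p (hh p t)) //.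
Qed.

Lemma near_agree (phi : baire_space) K :
  \forall psi \near phi, forall i, (i <= K)%N -> psi i = phi i.
Proof.
have one i : \forall psi \near phi, psi i = phi i.
  have := @proj_continuous nat (fun _ => nat) i phi.
  move=> /(_ [set phi i]) H; apply: H; exact: discrete_set1.
elim: K => [|K IH].
  apply: filterS (one 0%N) => psi H0 i; rewrite leqn0 => /eqP ->; exact: H0.
apply: filterS (filterI IH (one K.+1)) => psi [H1 H2] i.
by rewrite leq_eqVlt => /orP [/eqP ->|]; [|rewrite ltnS; apply: H1].
Qed.

Definition Phi (phi : baire_space) : baire_space := HH phi.

Lemma Phi_cont : continuous Phi.
Proof.
move=> phi.
apply/pointwise_cvgP => t.
apply/discrete_cvg.
have := near_agree phi (hh phi t).
apply: filterS => psi Hp /=; exact: HH_eq.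
Qed.
Lemma cont_borel (S T : topologicalType) (F : S -> T) : continuous F -> borel_fun F.
Proof.
move=> cF B; rewrite /borel_set.
have : <<s open >> `<=` [set B : set T | <<s open >> (F @^-1` B)].
  apply: smallest_sub.
    split.
    - by rewrite /= preimage_set0; exact: sigma_algebra0.
    - move=> A /= HA; rewrite setTD -preimage_setC.
      rewrite -setTD; exact: sigma_algebraCD.
    - move=> A HA /=; rewrite preimage_bigcup; exact: sigma_algebra_bigcup.
  move=> A oA /=; apply: sub_sigma_algebra.
  by move/continuousP: cF; apply.
by apply.
Qed.

Theorem lemma2p6 (X : set cantor_space) : nice X ->
  forall f : cantor_space -> baire_space, borel_fun f ->
    exists nk : nat -> nat,
      (forall k, (nk k < nk k.+1)%N) /\
      forall x, X x -> infinitely_many (fun k => (f x (nk k) < nk k.+1)%N).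
Proof.
move=> nX f bf.
have bF : borel_fun (Phi \o f).
  move=> B HB; rewrite comp_preimage; apply: bf; exact: cont_borel Phi_cont B HB.
have [g Hg] := nX _ bF.
exists (nkseq (rmax g)); split.
  move=> k /=; lia.
move=> x Xx N.
have [k [Nk Hk]] := @combi g (f x) N (Hg x Xx).
by exists k.
Qed.
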